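(* For $\mathbf z,\mathbf w\in\mathbb C^m\setminus\{0\}$: $$\mathbf Q_2^{(\hbar)}(\mathbf z,\mathbf w)=\tfrac12\Big(e^{(z_1\overline{w_1}+z_2\overline{w_2})/\hbar}+e^{-(z_1\overline{w_1}+z_2\overline{w_2})/\hbar}\Big),$$ $$\mathbf Q_4^{(\hbar)}(\mathbf z,\mathbf w)=\frac{1}{2\pi}\int_0^{2\pi}\exp\Big(\tfrac1\hbar\,\mathbf z\cdot \mathrm T(g(\psi))\mathbf w\Big)d\psi,$$ $$\mathbf Q_8^{(\hbar)}(\mathbf z,\mathbf w)=\int_{\theta=0}^{\pi/2}\int_{\alpha=0}^{2\pi}\int_{\gamma=0}^{2\pi}\exp\Big(\tfrac1\hbar\,\mathbf z\cdot \mathrm T(g(\theta,\alpha,\gamma))\mathbf w\Big)\,dm(\theta,\alpha,\gamma),$$ where $g(\psi)=e^{i\psi}\in S^1$, $g(\theta,\alpha,\gamma)=\begin{pmatrix}\cos\theta\, e^{i\alpha}&\sin\theta\, e^{i\gamma}\\ -\sin\theta\, e^{-i\gamma}&\cos\theta\, e^{-i\alpha}\end{pmatrix}\in\mathrm{SU}(2)$, and $dm(\theta,\alpha,\gamma)=\frac{1}{2\pi^2}\sin\theta\cos\theta\,d\theta\,d\alpha\,d\gamma$.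
   Context: For $\mathbf z,\mathbf w\in\mathbb C^k$ write $\mathbf z\cdot\mathbf w=\sum_{s=1}^k z_s\overline{w_s}$; $\hbar>0$. The kernels are $\mathbf Q_2^{(\hbar)}(\mathbf z,\mathbf w)=\sum_{k\ge0}\frac{(z_1\overline{w_1}+z_2\overline{w_2})^{2k}}{(2k)!\hbar^{2k}}$, $\mathbf Q_4^{(\hbar)}(\mathbf z,\mathbf w)=\sum_{k\ge0}\frac{(z_1\overline{w_1}+z_2\overline{w_2})^{k}(z_3\overline{w_3}+z_4\overline{w_4})^{k}}{(k!)^2\hbar^{2k}}$, $\mathbf Q_8^{(\hbar)}(\mathbf z,\mathbf w)=\sum_{k\ge0}\frac{\varrho(\mathbf z,\mathbf w)^k}{k!(k+1)!\hbar^{2k}}$, with $\varrho(\mathbf u,\mathbf v)=[u_1\overline{v_1}+u_2\overline{v_2}+u_3\overline{v_3}+u_4\overline{v_4}][u_5\overline{v_5}+u_6\overline{v_6}+u_7\overline{v_7}+u_8\overline{v_8}]+[u_7\overline{v_1}-u_8\overline{v_2}+u_5\overline{v_3}-u_6\overline{v_4}][u_2\overline{v_8}-u_3\overline{v_5}+u_4\overline{v_6}-u_1\overline{v_7}]$. Group actions: for $g=e^{i\theta}\in S^1$, $\mathrm T(g)=\mathrm{diag}(e^{-i\theta},e^{-i\theta},e^{i\theta},e^{i\theta})$ on $\mathbb C^4$; for $g\in\mathrm{SU}(2)$, $\mathrm T(g)=\mathbf L^\dagger\mathbf V(g)\mathbf L$ on $\mathbb C^8$, where $\mathbf V(g)$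 is the block-diagonal $8\times8$ matrix with four diagonal $2\times2$ blocks equal to $g$, and $\mathbf L$ is the $8\times 8$ real matrix whose rows are, in order, $e_1,e_7,e_3,e_5,-e_4,e_6,-e_2,e_8$ ($e_j$ the standard basis row vectors). *)

(* Defs.v *)
From Stdlib Require Import Reals Lra Arith ClassicalEpsilon Factorial.
Open Scope R_scope.

Record C := mkC { Re : R ; Im : R }.

Definition C0 : C := mkC 0 0.
Definition C1 : C := mkC 1 0.
Definition RtoC (r : R) : C := mkC r 0.
Definition Cadd (a b : C) : C := mkC (Re a + Re b) (Im a + Im b).
Definition Copp (a : C) : C := mkC (- Re a) (- Im a).
Definition Csub (a b : C) : C := Cadd a (Copp b).
Definition Cmul (a b : C) : C :=
  mkC (Re a * Re b - Im a * Im b) (Re a * Im b + Im a * Re b).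
Definition Cscale (r : R) (a : C) : C := mkC (r * Re a) (r * Im a).
Definition Cconj (a : C) : C := mkC (Re a) (- Im a).
Fixpoint Cpow (a : C) (n : nat) : C :=
  match n with O => C1 | S n => Cmul a (Cpow a n) end.
Definition Cexp (a : C) : C := mkC (exp (Re a) * cos (Im a)) (exp (Re a) * sin (Im a)).
Definition Cexpi (t : R) : C := mkC (cos t) (sin t).

Definition Ccv (u : nat -> C) (l : C) : Prop :=
  Un_cv (fun n => Re (u n)) (Re l) /\ Un_cv (fun n => Im (u n)) (Im l).

Fixpoint Cpartial (f : nat -> C) (N : nat) : C :=
  match N with O => f O | S N => Cadd (Cpartial f N) (f (S N)) end.

Definition Cseries_sum (f : nat -> C) (l : C) : Prop := Ccv (Cpartial f) l.

(* A vector of C^k is a function nat -> C of which only the entries 1..k matter;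
   a k x k matrix is a function nat -> nat -> C with entries (i,j), 1<=i,j<=k. *)
Definition Cvec := nat -> C.
Definition Cmat := nat -> nat -> C.

Fixpoint Csum (k : nat) (f : nat -> C) : C :=
  match k with O => C0 | S k => Cadd (Csum k f) (f (S k)) end.

Definition Cdot (k : nat) (z w : Cvec) : C := Csum k (fun s => Cmul (z s) (Cconj (w s))).

Definition vec_nonzero (k : nat) (z : Cvec) : Prop :=
  exists s, (1 <= s <= k)%nat /\ z s <> C0.

Definition mat_vec (k : nat) (A : Cmat) (w : Cvec) : Cvec :=
  fun i => Csum k (fun j => Cmul (A i j) (w j)).
Definition mat_mul (k : nat) (A B : Cmat) : Cmat :=
  fun i j => Csum k (fun l => Cmul (A i l) (B l j)).
Definition mat_adj (A : Cmat) : Cmat := fun i j => Cconj (A j i).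

Definition T_S1 (psi : R) : Cmat := fun i j =>
  if Nat.eqb i j then
    (if Nat.eqb i 1 then Cexpi (- psi) else if Nat.eqb i 2 then Cexpi (- psi)
     else if Nat.eqb i 3 then Cexpi psi else if Nat.eqb i 4 then Cexpi psi else C0)
  else C0.

Definition mat2 := nat -> nat -> C.

(* V(g): block diagonal 8x8 with four diagonal 2x2 blocks equal to g *)
Definition V8 (g : mat2) : Cmat := fun i j =>
  if andb (andb (Nat.leb 1 i) (Nat.leb i 8)) (andb (Nat.leb 1 j) (Nat.leb j 8)) then
    (if Nat.eqb ((i - 1) / 2) ((j - 1) / 2)
     then g (S ((i - 1) mod 2)) (S ((j - 1) mod 2)) else C0)
  else C0.

(* L: rows e_1, e_7, e_3, e_5, -e_4, e_6, -e_2, e_8 *)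
Definition Lrow (i : nat) : nat * R :=
  match i with
  | 1 => (1%nat, 1) | 2 => (7%nat, 1) | 3 => (3%nat, 1) | 4 => (5%nat, 1)
  | 5 => (4%nat, -1) | 6 => (6%nat, 1) | 7 => (2%nat, -1) | 8 => (8%nat, 1)
  | _ => (0%nat, 0) end.
Definition L8 : Cmat := fun i j =>
  let (c, sgn) := Lrow i in if Nat.eqb c j then RtoC sgn else C0.

Definition T_SU2 (g : mat2) : Cmat := mat_mul 8 (mat_adj L8) (mat_mul 8 (V8 g) L8).

Definition g_SU2 (theta alpha gamma : R) : mat2 := fun a b =>
  match a, b with
  | 1%nat, 1%nat => Cscale (cos theta) (Cexpi alpha)
  | 1%nat, 2%nat => Cscale (sin theta) (Cexpi gamma)
  | 2%nat, 1%nat => Cscale (- sin theta) (Cexpi (- gamma))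
  | 2%nat, 2%nat => Cscale (cos theta) (Cexpi (- alpha))
  | _, _ => C0 end.

Definition u12 (z w : Cvec) : C :=
  Cadd (Cmul (z 1%nat) (Cconj (w 1%nat))) (Cmul (z 2%nat) (Cconj (w 2%nat))).
Definition u34 (z w : Cvec) : C :=
  Cadd (Cmul (z 3%nat) (Cconj (w 3%nat))) (Cmul (z 4%nat) (Cconj (w 4%nat))).

Definition pair_ (u v : Cvec) (a b : nat) : C := Cmul (u a) (Cconj (v b)).

Definition varrho (u v : Cvec) : C :=
  Cadd
    (Cmul (Csum 4 (fun s => pair_ u v s s)) (Csum 4 (fun s => pair_ u v (s + 4) (s + 4))))
    (Cmul
      (Cadd (Csub (pair_ u v 7 1) (pair_ u v 8 2)) (Csub (pair_ u v 5 3) (pair_ u v 6 4)))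
      (Cadd (Csub (pair_ u v 2 8) (pair_ u v 3 5)) (Csub (pair_ u v 4 6) (pair_ u v 1 7)))).

Definition Q2_term (hbar : R) (z w : Cvec) (k : nat) : C :=
  Cscale (/ (INR (fact (2 * k)) * hbar ^ (2 * k))) (Cpow (u12 z w) (2 * k)).
Definition Q4_term (hbar : R) (z w : Cvec) (k : nat) : C :=
  Cscale (/ ((INR (fact k)) ^ 2 * hbar ^ (2 * k)))
         (Cmul (Cpow (u12 z w) k) (Cpow (u34 z w) k)).
Definition Q8_term (hbar : R) (z w : Cvec) (k : nat) : C :=
  Cscale (/ (INR (fact k) * INR (fact (S k)) * hbar ^ (2 * k))) (Cpow (varrho z w) k).

(* Riemann integral of a real function on [a,b]; (default 0 if not integrable,
   which never happens below: all integrands are continuous). *)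
Definition Rint (f : R -> R) (a b : R) : R :=
  match excluded_middle_informative (inhabited (Riemann_integrable f a b)) with
  | left H => RiemannInt (epsilon H (fun _ => True))
  | right _ => 0
  end.

Definition Cint (f : R -> C) (a b : R) : C :=
  mkC (Rint (fun t => Re (f t)) a b) (Rint (fun t => Im (f t)) a b).

(* Main.v *)
Require Import Defs.
From Stdlib Require Import Reals Lra Lia Psatz FunctionalExtensionality Factorial ClassicalEpsilon ZArith.
From Coquelicot Require Import Rcomplements Rbar Hierarchy RInt Series PSeries Derive Continuity Lim_seq AutoDerive ElemFct RInt_analysis.
Import Defs.
Open Scope R_scope.


Lemma C_ext (a b : C) : Re a = Re b -> Im a = Im b -> a = b.
Proof. destruct a, b; simpl; intros; subst; auto. Qed.

Ltac csolve := intros; repeat match goal with a : C |- _ => destruct a end;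
  apply C_ext; simpl; ring.

Lemma Cring : ring_theory C0 C1 Cadd Cmul Csub Copp (@eq C).
Proof. constructor; unfold Csub; csolve. Qed.
Add Ring Cring : Cring.

Lemma Cscale_mul r a : Cscale r a = Cmul (RtoC r) a. Proof. csolve. Qed.
Lemma RtoC_plus a b : RtoC (a + b) = Cadd (RtoC a) (RtoC b). Proof. apply C_ext; simpl; ring. Qed.
Lemma RtoC_mult a b : RtoC (a * b) = Cmul (RtoC a) (RtoC b). Proof. apply C_ext; simpl; ring. Qed.
Lemma RtoC_opp a : RtoC (- a) = Copp (RtoC a). Proof. apply C_ext; simpl; ring. Qed.
Lemma RtoC_0 : RtoC 0 = C0. Proof. reflexivity. Qed.
Lemma RtoC_1 : RtoC 1 = C1. Proof. reflexivity. Qed.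

Lemma Cpow_S a n : Cpow a (S n) = Cmul a (Cpow a n). Proof. reflexivity. Qed.
Lemma Cpow_0 a : Cpow a 0 = C1. Proof. reflexivity. Qed.
Lemma Cpow_mul a b n : Cpow (Cmul a b) n = Cmul (Cpow a n) (Cpow b n).
Proof. induction n; simpl; [ring|rewrite IHn; ring]. Qed.
Lemma Cpow_add a n m : Cpow a (n + m) = Cmul (Cpow a n) (Cpow a m).
Proof. induction n; simpl; [ring|rewrite IHn; ring]. Qed.
Lemma Cpow_RtoC r n : Cpow (RtoC r) n = RtoC (r ^ n).
Proof. induction n; simpl; [reflexivity|rewrite IHn, RtoC_mult; reflexivity]. Qed.
Lemma Cpow_scale r a n : Cpow (Cscale r a) n = Cscale (r ^ n) (Cpow a n).
Proof. rewrite !Cscale_mul, Cpow_mul, Cpow_RtoC; reflexivity. Qed.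
Lemma Cpow_pow a n m : Cpow a (n * m) = Cpow (Cpow a n) m.
Proof. induction m; simpl. rewrite Nat.mul_0_r; reflexivity.
  rewrite Nat.mul_succ_r, Nat.add_comm, Cpow_add, IHm; reflexivity. Qed.

Lemma Cexp_add a b : Cexp (Cadd a b) = Cmul (Cexp a) (Cexp b).
Proof. destruct a, b; apply C_ext; unfold Cexp; simpl; rewrite ?exp_plus, ?cos_plus, ?sin_plus; ring. Qed.
Lemma Cexpi_add a b : Cexpi (a + b) = Cmul (Cexpi a) (Cexpi b).
Proof. apply C_ext; unfold Cexpi; simpl; rewrite ?cos_plus, ?sin_plus; ring. Qed.
Lemma Cexpi_0 : Cexpi 0 = C1.
Proof. apply C_ext; unfold Cexpi; simpl; rewrite ?cos_0, ?sin_0; reflexivity. Qed.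
Lemma deMoivre t n : Cpow (Cexpi t) n = Cexpi (INR n * t).
Proof. induction n. simpl. rewrite Rmult_0_l, Cexpi_0; reflexivity.
  rewrite Cpow_S, IHn, <- Cexpi_add, S_INR. f_equal; ring. Qed.

Lemma Cpartial_ext f g n : (forall k, (k <= n)%nat -> f k = g k) -> Cpartial f n = Cpartial g n.
Proof. induction n; intros H; simpl. apply H; lia. rewrite IHn, H; auto; intros; apply H; lia. Qed.
Lemma Cpartial_add f g n : Cpartial (fun k => Cadd (f k) (g k)) n = Cadd (Cpartial f n) (Cpartial g n).
Proof. induction n; simpl; [reflexivity| rewrite IHn; ring]. Qed.
Lemma Cpartial_mull K f n : Cpartial (fun k => Cmul K (f k)) n = Cmul K (Cpartial f n).
Proof. induction n; simpl; [reflexivity| rewrite IHn; ring]. Qed.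
Lemma Cpartial_shift f n : Cpartial f (S n) = Cadd (f O) (Cpartial (fun k => f (S k)) n).
Proof. induction n; simpl in *; [reflexivity| rewrite IHn; ring]. Qed.
Lemma Cpartial_zero n : Cpartial (fun _ => C0) n = C0.
Proof. induction n; simpl; [reflexivity| rewrite IHn; ring]. Qed.
Lemma Re_Cpartial f n : Re (Cpartial f n) = sum_f_R0 (fun k => Re (f k)) n.
Proof. induction n; simpl; [reflexivity| rewrite IHn; reflexivity]. Qed.
Lemma Im_Cpartial f n : Im (Cpartial f n) = sum_f_R0 (fun k => Im (f k)) n.
Proof. induction n; simpl; [reflexivity| rewrite IHn; reflexivity]. Qed.


Notation ris := (@is_series R_AbsRing R_NormedModule).
Notation rex := (@ex_series R_AbsRing R_NormedModule).
Lemma rs_plus a b la lb : ris a la -> ris b lb -> ris (fun n => a n + b n) (la + lb).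
Proof. apply (is_series_plus a b). Qed.
Lemma rs_minus a b la lb : ris a la -> ris b lb -> ris (fun n => a n - b n) (la - lb).
Proof. apply (is_series_minus a b). Qed.
Lemma rs_scal c a la : ris a la -> ris (fun n => c * a n) (c * la).
Proof. apply (is_series_scal_l c a). Qed.
Lemma rs_ext a b l : (forall n, a n = b n) -> ris a l -> ris b l.
Proof. apply is_series_ext. Qed.
Lemma sum_f_R0_zero n : sum_f_R0 (fun _ => 0) n = 0.
Proof. induction n; simpl; [reflexivity| rewrite IHn; ring]. Qed.
Lemma rs_zero : ris (fun _ => 0) 0.
Proof. apply is_series_Reals. intros eps He. exists O. intros n _. rewrite sum_f_R0_zero.
  unfold Rdist. rewrite Rminus_0_r, Rabs_R0. lra. Qed.

Definition csum (a : nat -> C) (l : C) :=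
  ris (fun n => Re (a n)) (Re l) /\ ris (fun n => Im (a n)) (Im l).

Lemma csum_Cseries a l : csum a l -> Cseries_sum a l.
Proof.
  intros [H1 H2]. apply is_series_Reals in H1, H2. split; intros eps He;
  [destruct (H1 eps He) as [N HN]|destruct (H2 eps He) as [N HN]]; exists N; intros n Hn;
  [rewrite Re_Cpartial|rewrite Im_Cpartial]; auto.
Qed.

Lemma csum_ext a b l : (forall n, a n = b n) -> csum a l -> csum b l.
Proof. intros H [H1 H2]; split; eapply rs_ext; eauto; intros; simpl; rewrite H; reflexivity. Qed.
Lemma csum_eq a l l' : l = l' -> csum a l -> csum a l'.
Proof. intros ->; auto. Qed.
Lemma csum_plus a b la lb : csum a la -> csum b lb -> csum (fun n => Cadd (a n) (b n)) (Cadd la lb).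
Proof. intros [H1 H2] [H3 H4]; split; simpl; apply rs_plus; auto. Qed.
Lemma csum_mulc K a l : csum a l -> csum (fun n => Cmul K (a n)) (Cmul K l).
Proof. intros [H1 H2]; split; simpl; apply rs_minus || apply rs_plus; apply rs_scal; auto. Qed.
Lemma csum_scale r a l : csum a l -> csum (fun n => Cscale r (a n)) (Cscale r l).
Proof. intros [H1 H2]; split; simpl; apply rs_scal; auto. Qed.
Lemma csum_unique a l1 l2 : csum a l1 -> csum a l2 -> l1 = l2.
Proof. intros [H1 H2] [H3 H4]. apply is_series_unique in H1, H2, H3, H4.
  apply C_ext; congruence. Qed.

Definition abs1 (z : C) := Rabs (Re z) + Rabs (Im z).
Lemma abs1_ge0 z : 0 <= abs1 z. Proof. unfold abs1; pose proof (Rabs_pos (Re z)); pose proof (Rabs_pos (Im z)); lra. Qed.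
Lemma abs1_add a b : abs1 (Cadd a b) <= abs1 a + abs1 b.
Proof. unfold abs1; simpl. pose proof (Rabs_triang (Re a) (Re b)); pose proof (Rabs_triang (Im a) (Im b)); lra. Qed.
Lemma abs1_mul a b : abs1 (Cmul a b) <= abs1 a * abs1 b.
Proof. unfold abs1; simpl.
  pose proof (Rabs_triang (Re a * Re b) (- (Im a * Im b))).
  pose proof (Rabs_triang (Re a * Im b) (Im a * Re b)).
  unfold Rminus. rewrite Rabs_Ropp, !Rabs_mult in *.
  pose proof (Rabs_pos (Re a)); pose proof (Rabs_pos (Im a));
  pose proof (Rabs_pos (Re b)); pose proof (Rabs_pos (Im b)). nra. Qed.
Lemma abs1_scale r a : abs1 (Cscale r a) = Rabs r * abs1 a.
Proof. unfold abs1; simpl; rewrite !Rabs_mult; ring. Qed.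
Lemma abs1_RtoC r : abs1 (RtoC r) = Rabs r.
Proof. unfold abs1; simpl; rewrite Rabs_R0; ring. Qed.
Lemma abs1_pow a n : abs1 (Cpow a n) <= abs1 a ^ n.
Proof. induction n; simpl. unfold abs1; simpl; rewrite Rabs_R0, Rabs_R1; lra.
  eapply Rle_trans; [apply abs1_mul|]. apply Rmult_le_compat_l; auto using abs1_ge0. Qed.
Lemma abs1_Cpartial f n : abs1 (Cpartial f n) <= sum_f_R0 (fun k => abs1 (f k)) n.
Proof. induction n; simpl. lra. eapply Rle_trans; [apply abs1_add|]. lra. Qed.
Lemma Rabs_Re_le z : Rabs (Re z) <= abs1 z. Proof. unfold abs1; pose proof (Rabs_pos (Im z)); lra. Qed.
Lemma Rabs_Im_le z : Rabs (Im z) <= abs1 z. Proof. unfold abs1; pose proof (Rabs_pos (Re z)); lra. Qed.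
Lemma abs1_Cexpi t : abs1 (Cexpi t) <= 2.
Proof. unfold abs1, Cexpi; simpl.
  pose proof (Rabs_le _ _ (COS_bound t)) as _ || idtac.
  assert (Rabs (cos t) <= 1) by (apply Rabs_le; apply COS_bound).
  assert (Rabs (sin t) <= 1) by (apply Rabs_le; apply SIN_bound). lra. Qed.

Lemma rs_ex_le a M : (forall n, Rabs (a n) <= M n) -> rex M -> rex a.
Proof. intros; exact (@ex_series_le R_AbsRing R_CompleteNormedModule a M H H0). Qed.

Lemma csum_exists a M : (forall n, abs1 (a n) <= M n) -> rex M -> exists l, csum a l.
Proof.
  intros H HM.
  assert (E1 : rex (fun n => Re (a n))).
  { apply (rs_ex_le _ M); auto. intros; eapply Rle_trans; [apply Rabs_Re_le|auto]. }
  assert (E2 : rex (fun n => Im (a n))).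
  { apply (rs_ex_le _ M); auto. intros; eapply Rle_trans; [apply Rabs_Im_le|auto]. }
  exists (mkC (Series (fun n => Re (a n))) (Series (fun n => Im (a n)))).
  split; simpl; apply Series_correct; auto.
Qed.

Lemma ex_abs1_Re a : rex (fun n => abs1 (a n)) -> rex (fun n => Rabs (Re (a n))).
Proof. intros H; apply (rs_ex_le _ _ (fun n => Rabs_Re_le (a n)) ) || idtac.
  apply (rs_ex_le _ (fun n => abs1 (a n))); auto. intros; rewrite Rabs_Rabsolu; apply Rabs_Re_le. Qed.
Lemma ex_abs1_Im a : rex (fun n => abs1 (a n)) -> rex (fun n => Rabs (Im (a n))).
Proof. intros H.
  apply (rs_ex_le _ (fun n => abs1 (a n))); auto. intros; rewrite Rabs_Rabsolu; apply Rabs_Im_le. Qed.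

Lemma csum_mult a b la lb : csum a la -> csum b lb ->
  rex (fun n => abs1 (a n)) -> rex (fun n => abs1 (b n)) ->
  csum (fun n => Cpartial (fun k => Cmul (a k) (b (n - k)%nat)) n) (Cmul la lb).
Proof.
  intros [Ha1 Ha2] [Hb1 Hb2] Ea Eb.
  pose proof (ex_abs1_Re _ Ea); pose proof (ex_abs1_Im _ Ea);
  pose proof (ex_abs1_Re _ Eb); pose proof (ex_abs1_Im _ Eb).
  split; rewrite ?Re_Cpartial, ?Im_Cpartial; simpl.
  - eapply rs_ext; [|apply rs_minus; apply is_series_mult; [apply Ha1|apply Hb1| | |apply Ha2|apply Hb2| |]; auto].
    intros n; simpl. rewrite Re_Cpartial, <- minus_sum. reflexivity.
  - eapply rs_ext; [|apply rs_plus; apply is_series_mult; [apply Ha1|apply Hb2| | |apply Ha2|apply Hb1| |]; auto].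
    intros n; simpl. rewrite Im_Cpartial, <- plus_sum. reflexivity.
Qed.

Lemma rs_even (f : nat -> R) l : ris (fun k => f (2 * k)%nat) l -> (forall k, f (2 * k + 1)%nat = 0) ->
  ris f l.
Proof.
  intros H H0.
  assert (A : is_pseries (fun k => f (2 * k)%nat) (1 ^ 2) l).
  { apply is_pseries_R. eapply rs_ext; [|apply H]. intros n; cbv beta; rewrite <- pow_mult, pow1, Rmult_1_r; reflexivity. }
  assert (B : is_pseries (fun k => f (2 * k + 1)%nat) (1 ^ 2) 0).
  { apply is_pseries_R. eapply rs_ext; [|apply rs_zero]. intros; rewrite H0; symmetry; apply Rmult_0_l. }
  pose proof (is_pseries_odd_even f 1 _ _ A B) as D. apply is_pseries_R in D.
  eapply is_series_ext in D. replace l with (l + 1 * 0) by ring. apply D.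
  intros; rewrite pow1; apply Rmult_1_r.
Qed.

Lemma csum_even a l : csum (fun k => a (2 * k)%nat) l -> (forall k, a (2 * k + 1)%nat = C0) -> csum a l.
Proof. intros [H1 H2] H0; split; [apply (rs_even (fun n => Re (a n)))|apply (rs_even (fun n => Im (a n)))]; auto;
  intros; rewrite H0; reflexivity. Qed.


Lemma fact_pos n : 0 < INR (fact n). Proof. apply INR_fact_lt_0. Qed.
Lemma INR_fact_S n : INR (fact (S n)) = INR (S n) * INR (fact n).
Proof. rewrite fact_simpl, mult_INR; reflexivity. Qed.

Definition Bt (u v : C) n k :=
  Cmul (Cscale (/ INR (fact k)) (Cpow u k)) (Cscale (/ INR (fact (n - k))) (Cpow v (n - k))).

Lemma Bt_i u v n j : (j <= n)%nat ->
  Cscale (INR (S j)) (Bt u v (S n) (S j)) = Cmul u (Bt u v n j).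
Proof.
  intros H. unfold Bt. replace (S n - S j)%nat with (n - j)%nat by lia.
  rewrite Cpow_S. rewrite INR_fact_S.
  pose proof (fact_pos j). pose proof (fact_pos (n - j)). pose proof (pos_INR j).
  assert (Hs: 0 < INR (S j)) by (apply lt_0_INR; lia). set (r := INR (S j)) in *; clearbody r.
  generalize (Cpow u j) (Cpow v (n - j)). intros U V.
  destruct u, U, V; apply C_ext; simpl; field; repeat split; apply Rgt_not_eq; assumption.
Qed.

Lemma Bt_ii u v n k : (k <= n)%nat ->
  Cscale (INR (S n - k)) (Bt u v (S n) k) = Cmul v (Bt u v n k).
Proof.
  intros H. unfold Bt. replace (S n - k)%nat with (S (n - k))%nat by lia.
  rewrite Cpow_S. rewrite INR_fact_S.
  pose proof (fact_pos k). pose proof (fact_pos (n - k)). pose proof (pos_INR (n - k)).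
  assert (Hs: 0 < INR (S (n - k))) by (apply lt_0_INR; lia). set (r := INR (S (n - k))) in *; clearbody r.
  generalize (Cpow u k) (Cpow v (n - k)). intros U V.
  destruct v, U, V; apply C_ext; simpl; field; repeat split; apply Rgt_not_eq; assumption.
Qed.

Lemma Cscale_0 x : Cscale 0 x = C0. Proof. csolve. Qed.
Lemma Cpartial_scale_sum (r s : nat -> R) f n :
  Cpartial (fun k => Cscale (r k + s k) (f k)) n =
  Cadd (Cpartial (fun k => Cscale (r k) (f k)) n) (Cpartial (fun k => Cscale (s k) (f k)) n).
Proof. rewrite <- Cpartial_add. apply Cpartial_ext; intros; csolve. Qed.

Lemma binom u v n : Cpartial (Bt u v n) n = Cscale (/ INR (fact n)) (Cpow (Cadd u v) n).
Proof.
  induction n.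
  - unfold Bt; simpl. apply C_ext; simpl; field.
  - assert (E : Cscale (INR (S n)) (Cpartial (Bt u v (S n)) (S n)) = Cmul (Cadd u v) (Cpartial (Bt u v n) n)).
    { rewrite Cscale_mul, <- Cpartial_mull.
      rewrite (Cpartial_ext _ (fun k => Cscale (INR k + INR (S n - k)) (Bt u v (S n) k))).
      2:{ intros k Hk. rewrite <- plus_INR. replace (k + (S n - k))%nat with (S n) by lia. rewrite Cscale_mul; reflexivity. }
      rewrite Cpartial_scale_sum. rewrite Cpartial_shift.
      replace (Cscale (INR 0) (Bt u v (S n) 0)) with C0 by (simpl INR; rewrite Cscale_0; reflexivity).
      rewrite (Cpartial_ext (fun k => Cscale (INR (S k)) (Bt u v (S n) (S k))) (fun k => Cmul u (Bt u v n k)))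
        by (intros; apply Bt_i; lia).
      simpl Cpartial at 2. rewrite Nat.sub_diag.
      replace (Cscale (INR 0) (Bt u v (S n) (S n))) with C0 by (simpl INR; rewrite Cscale_0; reflexivity).
      rewrite (Cpartial_ext (fun k => Cscale (INR (S n - k)) (Bt u v (S n) k)) (fun k => Cmul v (Bt u v n k)))
        by (intros; apply Bt_ii; lia).
      rewrite !Cpartial_mull. ring. }
    rewrite IHn in E. rewrite Cpow_S, INR_fact_S.
    assert (Hn : 0 < INR (S n)) by (apply lt_0_INR; lia).
    pose proof (fact_pos n).
    set (r := INR (S n)) in *; clearbody r.
    transitivity (Cscale (/ r) (Cscale r (Cpartial (Bt u v (S n)) (S n)))).
    { generalize (Cpartial (Bt u v (S n)) (S n)); intros c; destruct c; apply C_ext; simpl; field; apply Rgt_not_eq; auto. }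
    rewrite E.
    generalize (Cpow (Cadd u v) n) (Cadd u v). intros P Q.
    destruct P, Q; apply C_ext; simpl; field; split; apply Rgt_not_eq; auto.
Qed.

Ltac req := match goal with |- @eq _ ?a ?b => change (@eq R a b) end.

Definition Ci := mkC 0 1.
Lemma Ci_pow_even k : Cpow Ci (2 * k) = RtoC ((-1) ^ k).
Proof. induction k. reflexivity.
  replace (2 * S k)%nat with (S (S (2 * k))) by lia. rewrite !Cpow_S. rewrite IHk.
  apply C_ext; simpl; ring. Qed.
Lemma Ci_pow_odd k : Cpow Ci (2 * k + 1) = mkC 0 ((-1) ^ k).
Proof. rewrite Nat.add_comm. rewrite Cpow_add. rewrite Ci_pow_even. apply C_ext; simpl; ring. Qed.

Lemma cos_in_cos y : cos_in (Rsqr y) (cos y).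
Proof. unfold cos. destruct (exist_cos (Rsqr y)). assumption. Qed.
Lemma sin_in_sin y : exists s, sin_in (Rsqr y) s /\ sin y = y * s.
Proof. unfold sin. destruct (exist_sin (Rsqr y)) as [s Hs]. exists s; auto. Qed.

Lemma pseries_cos y : is_pseries (fun n => / INR (fact n) * Re (Cpow Ci n)) y (cos y).
Proof.
  replace (cos y) with (cos y + y * 0) by ring.
  apply is_pseries_odd_even.
  - apply is_pseries_R. apply is_series_Reals.
    pose proof (cos_in_cos y) as H. unfold cos_in in H. rewrite Rsqr_pow2 in H.
    intros eps He. destruct (H eps He) as [N HN]. exists N. intros n Hn.
    rewrite (sum_eq _ (fun i => cos_n i * (y ^ 2) ^ i)). apply HN; auto.
    intros i _. cbv beta. rewrite Ci_pow_even. unfold cos_n. simpl Re. field. apply INR_fact_neq_0.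
  - apply is_pseries_R. eapply rs_ext; [|apply rs_zero]. intros n. cbv beta.
    rewrite Ci_pow_odd. simpl Re. req; ring.
Qed.

Lemma pseries_sin y : is_pseries (fun n => / INR (fact n) * Im (Cpow Ci n)) y (sin y).
Proof.
  destruct (sin_in_sin y) as [s [Hs ->]].
  replace (y * s) with (0 + y * s) by ring.
  apply is_pseries_odd_even.
  - apply is_pseries_R. eapply rs_ext; [|apply rs_zero]. intros n. cbv beta.
    rewrite Ci_pow_even. simpl Im. req; ring.
  - apply is_pseries_R. apply is_series_Reals.
    unfold sin_in in Hs. rewrite Rsqr_pow2 in Hs.
    intros eps He. destruct (Hs eps He) as [N HN]. exists N. intros n Hn.
    rewrite (sum_eq _ (fun i => sin_n i * (y ^ 2) ^ i)). apply HN; auto.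
    intros i _. rewrite Ci_pow_odd. unfold sin_n. simpl Im. field. apply INR_fact_neq_0.
Qed.

Lemma exp_rex x : rex (fun n => / INR (fact n) * x ^ n).
Proof. exists (exp x). exact (proj1 (is_pseries_R _ _ _) (is_exp_Reals x)). Qed.

Lemma ex_abs1_le a M : (forall n, abs1 (a n) <= M n) -> rex M -> rex (fun n => abs1 (a n)).
Proof. intros H HM. apply (rs_ex_le _ M); auto. intros; rewrite Rabs_pos_eq; auto using abs1_ge0. Qed.

Lemma abs1_expterm z n : abs1 (Cscale (/ INR (fact n)) (Cpow z n)) <= / INR (fact n) * abs1 z ^ n.
Proof. rewrite abs1_scale, Rabs_pos_eq.
  apply Rmult_le_compat_l. left; apply Rinv_0_lt_compat, fact_pos. apply abs1_pow.
  left; apply Rinv_0_lt_compat, fact_pos. Qed.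

Lemma exp_abs_rex z : rex (fun n => abs1 (Cscale (/ INR (fact n)) (Cpow z n))).
Proof. apply (ex_abs1_le _ _ (abs1_expterm z)). apply exp_rex. Qed.

Lemma exp_series z : csum (fun n => Cscale (/ INR (fact n)) (Cpow z n)) (Cexp z).
Proof.
  destruct z as [x y].
  set (A := fun n => Cscale (/ INR (fact n)) (Cpow (RtoC x) n)).
  set (B := fun n => Cscale (/ INR (fact n)) (Cpow (mkC 0 y) n)).
  assert (HA : csum A (RtoC (exp x))).
  { split; simpl.
    - eapply rs_ext; [|exact (proj1 (is_pseries_R _ _ _) (is_exp_Reals x))]. intros n; unfold A.
      rewrite Cpow_RtoC. simpl. ring.
    - eapply rs_ext; [|apply rs_zero]. intros n; unfold A. rewrite Cpow_RtoC. simpl. ring. }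
  assert (HB : csum B (Cexpi y)).
  { assert (E : forall n, B n = Cscale (/ INR (fact n)) (Cscale (y ^ n) (Cpow Ci n))).
    { intros n; unfold B. rewrite <- Cpow_scale. f_equal. f_equal. apply C_ext; simpl; ring. }
    eapply csum_ext; [intros n; symmetry; apply E|].
    split; simpl.
    - eapply rs_ext; [|exact (proj1 (is_pseries_R _ _ _) (pseries_cos y))]. intros n; cbv beta; simpl; req; ring.
    - eapply rs_ext; [|exact (proj1 (is_pseries_R _ _ _) (pseries_sin y))]. intros n; cbv beta; simpl; req; ring. }
  pose proof (csum_mult A B _ _ HA HB (exp_abs_rex _) (exp_abs_rex _)) as H.
  replace (Cexp (mkC x y)) with (Cmul (RtoC (exp x)) (Cexpi y))
    by (apply C_ext; unfold Cexp, Cexpi; simpl; ring).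
  eapply csum_ext; [|exact H]. intros n. cbv beta.
  replace (mkC x y) with (Cadd (RtoC x) (mkC 0 y)) by (apply C_ext; simpl; ring).
  rewrite <- binom. apply Cpartial_ext. intros k Hk. reflexivity.
Qed.


Notation rint := (@is_RInt R_NormedModule).

Lemma Rint_eq f a b l : rint f a b l -> Rint f a b = l.
Proof.
  intros H. unfold Rint. destruct (excluded_middle_informative _) as [Hi|Hn].
  - rewrite <- (RInt_Reals f a b). apply is_RInt_unique; auto.
  - exfalso. apply Hn. constructor. apply ex_RInt_Reals_0. exists l; auto.
Qed.

Definition cint_is (f : R -> C) a b v :=
  rint (fun t => Re (f t)) a b (Re v) /\ rint (fun t => Im (f t)) a b (Im v).

Lemma Cint_eq f a b v : cint_is f a b v -> Cint f a b = v.
Proof. intros [H1 H2]. unfold Cint. rewrite (Rint_eq _ _ _ _ H1), (Rint_eq _ _ _ _ H2). destruct v; reflexivity. Qed.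

Lemma rint_ext (f g : R -> R) a b (l : R) : (forall t, f t = g t) -> rint f a b l -> rint g a b l.
Proof. intros H; apply is_RInt_ext; intros; apply H. Qed.
Lemma rint_plus f g a b lf lg : rint f a b lf -> rint g a b lg -> rint (fun t => f t + g t) a b (lf + lg).
Proof. apply (is_RInt_plus f g). Qed.
Lemma rint_minus f g a b lf lg : rint f a b lf -> rint g a b lg -> rint (fun t => f t - g t) a b (lf - lg).
Proof. apply (is_RInt_minus f g). Qed.
Lemma rint_scal f a b k lf : rint f a b lf -> rint (fun t => k * f t) a b (k * lf).
Proof. apply (is_RInt_scal f). Qed.
Lemma rint_eqv f a b (l l' : R) : l = l' -> rint f a b l -> rint f a b l'.
Proof. intros ->; auto. Qed.

Lemma cint_ext f g a b v : (forall t, f t = g t) -> cint_is f a b v -> cint_is g a b v.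
Proof. intros H [H1 H2]; split; eapply rint_ext; eauto; intros; cbv beta; rewrite H; auto. Qed.
Lemma cint_eqv f a b v v' : v = v' -> cint_is f a b v -> cint_is f a b v'.
Proof. intros ->; auto. Qed.
Lemma cint_plus f g a b v w : cint_is f a b v -> cint_is g a b w -> cint_is (fun t => Cadd (f t) (g t)) a b (Cadd v w).
Proof. intros [H1 H2] [H3 H4]; split; simpl; apply rint_plus; auto. Qed.
Lemma cint_mulc K f a b v : cint_is f a b v -> cint_is (fun t => Cmul K (f t)) a b (Cmul K v).
Proof. intros [H1 H2]; split; simpl; [apply rint_minus|apply rint_plus]; apply rint_scal; auto. Qed.
Lemma cint_scale r f a b v : cint_is f a b v -> cint_is (fun t => Cscale r (f t)) a b (Cscale r v).
Proof. intros [H1 H2]; split; simpl; apply rint_scal; auto. Qed.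
Lemma cint_zero a b : cint_is (fun _ => C0) a b C0.
Proof. split; simpl; apply rint_eqv with (l := scal (b - a) 0); try exact (is_RInt_const (V := R_NormedModule) a b 0); cbv; ring. Qed.
Lemma cint_const K a b : cint_is (fun _ => K) a b (Cscale (b - a) K).
Proof. split; simpl; [exact (is_RInt_const (V := R_NormedModule) a b (Re K))|exact (is_RInt_const (V := R_NormedModule) a b (Im K))]. Qed.
Lemma cint_sum (f : nat -> R -> C) (I : nat -> C) a b n :
  (forall k, cint_is (f k) a b (I k)) -> cint_is (fun t => Cpartial (fun k => f k t) n) a b (Cpartial I n).
Proof. intros H. induction n; simpl; auto. apply cint_plus; auto. Qed.

Lemma rint_derive (f df : R -> R) a b :
  (forall x, is_derive f x (df x)) -> (forall x, ex_derive df x) -> rint df a b (f b - f a).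
Proof. intros H1 H2. apply (is_RInt_derive (V := R_CompleteNormedModule) f df a b (fun x _ => H1 x)).
  intros x _. apply (ex_derive_continuous (K := R_AbsRing) (V := R_NormedModule)). apply H2. Qed.

Lemma cos_2PI_Z k : cos (IZR k * (2 * PI)) = 1.
Proof. replace (IZR k * (2 * PI)) with (2 * (IZR k * PI)) by ring.
  rewrite cos_2a_sin, sin_eq_0_1 by (exists k; ring). ring. Qed.
Lemma sin_2PI_Z k : sin (IZR k * (2 * PI)) = 0.
Proof. apply sin_eq_0_1. exists (2 * k)%Z. rewrite mult_IZR. simpl. ring. Qed.

Lemma fourier (k : Z) : cint_is (fun t => Cexpi (IZR k * t)) 0 (2 * PI)
  (if Z.eqb k 0 then RtoC (2 * PI) else C0).
Proof.
  destruct (Z.eqb_spec k 0) as [->|Hk].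
  - eapply cint_ext; [|eapply cint_eqv; [|apply (cint_const C1)]].
    + intros t; simpl; rewrite Rmult_0_l; symmetry; apply Cexpi_0.
    + apply C_ext; simpl; ring.
  - assert (Hk' : IZR k <> 0) by (apply not_0_IZR; auto).
    split; simpl.
    + eapply rint_eqv; [|apply (rint_derive (fun t => sin (IZR k * t) / IZR k))].
      * rewrite sin_2PI_Z, Rmult_0_r, sin_0. field; auto.
      * intros x. auto_derive; auto. field; auto.
      * intros x. auto_derive; auto.
    + eapply rint_eqv; [|apply (rint_derive (fun t => - cos (IZR k * t) / IZR k))].
      * rewrite cos_2PI_Z, Rmult_0_r, cos_0. field; auto.
      * intros x. auto_derive; auto. field; auto.
      * intros x. auto_derive; auto.
Qed.

Lemma ris_lim (u : nat -> R) l : ris u l -> is_lim_seq (fun N => sum_f_R0 u N) l.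
Proof. intros H. apply is_lim_seq_Reals. apply is_series_Reals in H. exact H. Qed.

Lemma rint_series (f : nat -> R -> R) (g : R -> R) (M I : nat -> R) (a b L : R) :
  (forall n t, Rabs (f n t) <= M n) -> rex M ->
  (forall n, rint (f n) a b (I n)) ->
  (forall t, ris (fun n => f n t) (g t)) ->
  ris I L -> rint g a b L.
Proof.
  intros HM [Mt HMt] HI Hg HL.
  set (Sp := fun N t => sum_f_R0 (fun n => f n t) N).
  assert (HS : forall N, rint (Sp N) a b (sum_f_R0 I N)).
  { induction N; simpl. apply HI. apply rint_plus; auto. }
  assert (Hpos : forall n, 0 <= M n) by (intros; eapply Rle_trans; [apply Rabs_pos|apply (HM n 0)]).
  assert (Hd : forall N d t, Rabs (Sp (d + N)%nat t - Sp N t) <= sum_f_R0 M (d + N) - sum_f_R0 M N).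
  { intros N d t; induction d.
    - simpl. unfold Rminus; rewrite !Rplus_opp_r, Rabs_R0; lra.
    - simpl (S d + N)%nat. unfold Sp in *. rewrite !(tech5 _ (d + N)).
      pose proof (HM (S (d + N)) t).
      assert (Rabs (sum_f_R0 (fun n => f n t) (d + N) + f (S (d + N)) t - sum_f_R0 (fun n => f n t) N)
         <= Rabs (sum_f_R0 (fun n => f n t) (d + N) - sum_f_R0 (fun n => f n t) N) + Rabs (f (S (d + N)) t)).
      { eapply Rle_trans; [|apply Rabs_triang]. right; f_equal; ring. }
      lra. }
  assert (Ht : forall N t, Rabs (g t - Sp N t) <= Mt - sum_f_R0 M N).
  { intros N t.
    assert (L1 : is_lim_seq (fun d => Rabs (Sp (d + N)%nat t - Sp N t)) (Rabs (g t - Sp N t))).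
    { apply (is_lim_seq_abs _ (Finite (g t - Sp N t))). apply is_lim_seq_minus'.
      - apply (is_lim_seq_incr_n (fun n => Sp n t) N). apply ris_lim, Hg.
      - apply is_lim_seq_const. }
    assert (L2 : is_lim_seq (fun d => sum_f_R0 M (d + N) - sum_f_R0 M N) (Mt - sum_f_R0 M N)).
    { apply is_lim_seq_minus'.
      - apply (is_lim_seq_incr_n (fun n => sum_f_R0 M n) N). apply ris_lim, HMt.
      - apply is_lim_seq_const. }
    pose proof (is_lim_seq_le _ _ _ _ (fun d => Hd N d t) L1 L2). simpl in H. exact H. }
  assert (U : filterlim Sp eventually (locally (g : fct_UniformSpace R R_UniformSpace))).
  { apply filterlim_locally. intros eps.
    pose proof (ris_lim _ _ HMt) as HM2. apply is_lim_seq_Reals in HM2.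
    destruct (HM2 eps (cond_pos eps)) as [N0 HN0]. exists N0. intros n Hn t.
    specialize (HN0 n Hn). unfold Rdist in HN0.
    change (Rabs (Sp n t - g t) < eps).
    rewrite <- Rabs_Ropp. replace (- (Sp n t - g t)) with (g t - Sp n t) by ring.
    eapply Rle_lt_trans; [apply Ht|]. rewrite Rabs_minus_sym in HN0.
    eapply Rle_lt_trans; [apply Rle_abs|exact HN0]. }
  destruct (filterlim_RInt (V := R_CompleteNormedModule) Sp a b eventually eventually_filter g (fun N => sum_f_R0 I N) HS U)
    as [If [HIf HgI]].
  replace L with If; auto.
  assert (HIf' : is_lim_seq (fun N => sum_f_R0 I N) If) by exact HIf.
  apply is_lim_seq_unique in HIf'. rewrite (is_lim_seq_unique _ _ (ris_lim _ _ HL)) in HIf'.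
  injection HIf'; auto.
Qed.

Lemma cint_series (f : nat -> R -> C) (g : R -> C) (M : nat -> R) (I : nat -> C) a b L :
  (forall n t, abs1 (f n t) <= M n) -> rex M ->
  (forall n, cint_is (f n) a b (I n)) ->
  (forall t, csum (fun n => f n t) (g t)) -> csum I L -> cint_is g a b L.
Proof.
  intros HM EM HI Hg HL. split.
  - apply (rint_series (fun n t => Re (f n t)) (fun t => Re (g t)) M (fun n => Re (I n))); auto.
    + intros; eapply Rle_trans; [apply Rabs_Re_le|auto].
    + intros n; apply (HI n).
    + intros t; apply (Hg t).
    + apply HL.
  - apply (rint_series (fun n t => Im (f n t)) (fun t => Im (g t)) M (fun n => Im (I n))); auto.
    + intros; eapply Rle_trans; [apply Rabs_Im_le|auto].
    + intros n; apply (HI n).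
    + intros t; apply (Hg t).
    + apply HL.
Qed.


Definition Fterm (w : C) (l : nat) : C := Cscale (/ (INR (fact l)) ^ 2) (Cpow w l).

Lemma fact_ge1 n : 1 <= INR (fact n).
Proof. apply (le_INR 1). apply lt_O_fact. Qed.

Lemma Fterm_bound w l : abs1 (Fterm w l) <= / INR (fact l) * abs1 w ^ l.
Proof.
  unfold Fterm. rewrite abs1_scale. pose proof (fact_ge1 l).
  assert (0 < / INR (fact l) ^ 2) by (apply Rinv_0_lt_compat; apply pow_lt; lra).
  rewrite Rabs_pos_eq by lra.
  apply Rmult_le_compat; try lra; auto using abs1_pow, abs1_ge0.
  apply Rinv_le_contravar; [lra|]. simpl. nra.
Qed.

Lemma Fterm_abs_rex w : rex (fun l => abs1 (Fterm w l)).
Proof. apply (ex_abs1_le _ _ (Fterm_bound w)). apply exp_rex. Qed.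

Definition Fdef (w : C) : C :=
  mkC (Series (fun l => Re (Fterm w l))) (Series (fun l => Im (Fterm w l))).

Lemma F_csum w : csum (Fterm w) (Fdef w).
Proof.
  destruct (csum_exists (Fterm w) _ (Fterm_bound w) (exp_rex _)) as [l [H1 H2]].
  split; simpl; apply Series_correct; eexists; eauto.
Qed.

Lemma Cpartial_single (f : nat -> C) n l : (l <= n)%nat -> (forall m, (m <= n)%nat -> m <> l -> f m = C0) ->
  Cpartial f n = f l.
Proof.
  induction n; intros Hl H.
  - assert (l = 0%nat) by lia. subst. reflexivity.
  - destruct (Nat.eq_dec l (S n)) as [->|Hne].
    + simpl. rewrite (Cpartial_ext f (fun _ => C0)). rewrite Cpartial_zero. ring.
      intros k Hk. apply H; lia.
    + simpl. rewrite IHn by (try lia; intros; apply H; lia). rewrite (H (S n)) by lia. ring.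
Qed.

Lemma Cpartial_allzero (f : nat -> C) n : (forall m, (m <= n)%nat -> f m = C0) -> Cpartial f n = C0.
Proof. intros H. rewrite (Cpartial_ext f (fun _ => C0)) by auto. apply Cpartial_zero. Qed.

Definition Kc (a b : C) n m := Cscale (/ (INR (fact m) * INR (fact (n - m)))) (Cmul (Cpow a m) (Cpow b (n - m))).
Definition rz n m := IZR (Z.of_nat m - Z.of_nat (n - m)).

Lemma term_eq a b t n m : (m <= n)%nat ->
  Cmul (Cscale (/ INR (fact m)) (Cpow (Cmul a (Cexpi t)) m))
       (Cscale (/ INR (fact (n - m))) (Cpow (Cmul b (Cexpi (- t))) (n - m))) =
  Cmul (Kc a b n m) (Cexpi (rz n m * t)).
Proof.
  intros Hm. unfold Kc, rz.
  rewrite !Cpow_mul, !deMoivre.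
  replace (IZR (Z.of_nat m - Z.of_nat (n - m)) * t) with (INR m * t + INR (n - m) * - t).
  2:{ rewrite minus_IZR, <- !INR_IZR_INZ. ring. }
  rewrite Cexpi_add.
  pose proof (fact_pos m). pose proof (fact_pos (n - m)).
  generalize (Cpow a m) (Cpow b (n - m)) (Cexpi (INR m * t)) (Cexpi (INR (n - m) * - t)).
  intros A B X Y. destruct A, B, X, Y. apply C_ext; simpl; field; split; apply Rgt_not_eq; auto.
Qed.

Definition Jterm (a b : C) n t :=
  Cpartial (fun m => Cmul (Cscale (/ INR (fact m)) (Cpow (Cmul a (Cexpi t)) m))
       (Cscale (/ INR (fact (n - m))) (Cpow (Cmul b (Cexpi (- t))) (n - m)))) n.

Definition JI (a b : C) n :=
  Cpartial (fun m => Cmul (Kc a b n m) (if Z.eqb (Z.of_nat m - Z.of_nat (n - m)) 0 then RtoC (2 * PI) else C0)) n.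

Lemma Jterm_int a b n : cint_is (Jterm a b n) 0 (2 * PI) (JI a b n).
Proof.
  unfold Jterm, JI.
  eapply cint_ext; [|apply cint_sum].
  - intros t. cbv beta. apply Cpartial_ext. intros m Hm. symmetry. apply term_eq; auto.
  - intros m. apply cint_mulc. apply fourier.
Qed.

Lemma JI_odd a b k : JI a b (2 * k + 1) = C0.
Proof.
  unfold JI. apply Cpartial_allzero. intros m Hm.
  replace (Z.of_nat m - Z.of_nat (2 * k + 1 - m))%Z with (2 * Z.of_nat m - 2 * Z.of_nat k - 1)%Z by lia.
  destruct (Z.eqb_spec (2 * Z.of_nat m - 2 * Z.of_nat k - 1) 0); [lia|]. ring.
Qed.

Lemma JI_even a b k : JI a b (2 * k) = Cscale (2 * PI) (Fterm (Cmul a b) k).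
Proof.
  unfold JI. rewrite (Cpartial_single _ _ k).
  2: lia.
  2:{ intros m Hm Hne. destruct (Z.eqb_spec (Z.of_nat m - Z.of_nat (2 * k - m)) 0); [lia|ring]. }
  replace (Z.of_nat k - Z.of_nat (2 * k - k))%Z with 0%Z by lia. simpl Z.eqb.
  unfold Kc, Fterm. replace (2 * k - k)%nat with k by lia.
  rewrite Cpow_mul. pose proof (fact_pos k).
  generalize (Cpow a k) (Cpow b k). intros A B. destruct A, B. apply C_ext; simpl; field; apply Rgt_not_eq; auto.
Qed.

Lemma J_lemma a b : cint_is (fun t => Cexp (Cadd (Cmul a (Cexpi t)) (Cmul b (Cexpi (- t))))) 0 (2 * PI)
  (Cscale (2 * PI) (Fdef (Cmul a b))).
Proof.
  set (A := 2 * abs1 a). set (B := 2 * abs1 b).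
  apply (cint_series (Jterm a b) _
    (fun n => sum_f_R0 (fun m => (/ INR (fact m) * A ^ m) * (/ INR (fact (n - m)) * B ^ (n - m))) n)
    (JI a b)).
  - intros n t. unfold Jterm. eapply Rle_trans; [apply abs1_Cpartial|]. apply sum_Rle. intros m Hm.
    eapply Rle_trans; [apply abs1_mul|].
    assert (Hu : forall (c : C) s, abs1 (Cmul c (Cexpi s)) <= 2 * abs1 c).
    { intros c s. eapply Rle_trans; [apply abs1_mul|]. pose proof (abs1_Cexpi s). pose proof (abs1_ge0 c). nra. }
    apply Rmult_le_compat; try apply abs1_ge0.
    + eapply Rle_trans; [apply abs1_expterm|]. apply Rmult_le_compat_l.
      left; apply Rinv_0_lt_compat, fact_pos. apply pow_incr. split; [apply abs1_ge0|apply Hu].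
    + eapply Rle_trans; [apply abs1_expterm|]. apply Rmult_le_compat_l.
      left; apply Rinv_0_lt_compat, fact_pos. apply pow_incr. split; [apply abs1_ge0|apply Hu].
  - pose proof (proj1 (is_pseries_R _ _ _) (is_exp_Reals A)) as E1.
    pose proof (proj1 (is_pseries_R _ _ _) (is_exp_Reals B)) as E2.
    assert (P1 : forall n, 0 <= / INR (fact n) * A ^ n).
    { intros; apply Rmult_le_pos; [left; apply Rinv_0_lt_compat, fact_pos|apply pow_le; unfold A; pose proof (abs1_ge0 a); lra]. }
    assert (P2 : forall n, 0 <= / INR (fact n) * B ^ n).
    { intros; apply Rmult_le_pos; [left; apply Rinv_0_lt_compat, fact_pos|apply pow_le; unfold B; pose proof (abs1_ge0 b); lra]. }
    eexists. exact (is_series_mult_pos _ _ _ _ E1 E2 P1 P2).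
  - apply Jterm_int.
  - intros t. unfold Jterm. rewrite Cexp_add.
    apply (csum_mult (fun m => Cscale (/ INR (fact m)) (Cpow (Cmul a (Cexpi t)) m))
                     (fun m => Cscale (/ INR (fact m)) (Cpow (Cmul b (Cexpi (- t))) m)));
      auto using exp_series, exp_abs_rex.
  - apply csum_even.
    + eapply csum_ext; [intros k; symmetry; apply JI_even|]. apply csum_scale, F_csum.
    + apply JI_odd.
Qed.


Ltac nz := repeat split; try (apply Rgt_not_eq; lra).
Lemma beta0 j : rint (fun t => cos t ^ (2 * j + 1) * sin t) 0 (PI / 2) (/ (2 * INR j + 2)).
Proof.
  eapply rint_eqv; [|apply (rint_derive (fun t => - cos t ^ (2 * j + 2) / (2 * INR j + 2)))].
  - rewrite cos_PI2, cos_0, pow1, pow_i by lia. field. pose proof (pos_INR j). lra.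
  - intros x. auto_derive; auto.
    replace (Init.Nat.pred (j + (j + 0) + 2)) with (2 * j + 1)%nat by lia.
    replace (INR (j + (j + 0) + 2)) with (2 * INR j + 2) by (rewrite !plus_INR; simpl; ring).
    field. pose proof (pos_INR j). lra.
  - intros x. auto_derive; auto.
Qed.

Lemma beta_step j l : rint (fun t => (2 * INR l + 2) * (cos t ^ (2 * S j + 1) * sin t ^ (2 * l + 1))
    - (2 * INR j + 2) * (cos t ^ (2 * j + 1) * sin t ^ (2 * S l + 1))) 0 (PI / 2) 0.
Proof.
  eapply rint_eqv; [|apply (rint_derive (fun t => cos t ^ (2 * j + 2) * sin t ^ (2 * l + 2)))].
  - rewrite cos_PI2, sin_0, !pow_i by lia. ring.
  - intros x. auto_derive; auto.
    replace (Init.Nat.pred (j + (j + 0) + 2)) with (2 * j + 1)%nat by lia.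
    replace (Init.Nat.pred (l + (l + 0) + 2)) with (2 * l + 1)%nat by lia.
    replace (j + (j + 0) + 2)%nat with (2 * j + 2)%nat by lia.
    replace (l + (l + 0) + 2)%nat with (2 * l + 2)%nat by lia.
    replace (2 * S j + 1)%nat with (2 * j + 3)%nat by lia.
    replace (2 * S l + 1)%nat with (2 * l + 3)%nat by lia.
    rewrite !plus_INR, !mult_INR. rewrite !pow_add. simpl. ring.
  - intros x. auto_derive; auto.
Qed.

Lemma beta j l : rint (fun t => cos t ^ (2 * j + 1) * sin t ^ (2 * l + 1)) 0 (PI / 2)
  (INR (fact j) * INR (fact l) / (2 * INR (fact (j + l + 1)))).
Proof.
  revert j. induction l; intros j.
  - eapply rint_ext; [|eapply rint_eqv; [|apply (beta0 j)]].
    + intros t; simpl; ring.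
    + replace (j + 0 + 1)%nat with (S j) by lia. rewrite INR_fact_S, S_INR. simpl.
      pose proof (fact_pos j). pose proof (pos_INR j). field. nz.
  - pose proof (IHl (S j)) as H1. pose proof (beta_step j l) as H2.
    assert (Hj : 0 < 2 * INR j + 2) by (pose proof (pos_INR j); lra).
    pose proof (rint_scal _ _ _ (/ (2 * INR j + 2)) _ (rint_minus _ _ _ _ _ _ (rint_scal _ _ _ (2 * INR l + 2) _ H1) H2)) as H3.
    eapply rint_ext; [|eapply rint_eqv; [|exact H3]].
    + intros t. cbv beta. field. nz.
    + replace (S j + l + 1)%nat with (S (j + S l))%nat by lia.
      replace (j + S l + 1)%nat with (S (j + S l))%nat by lia.
      rewrite !INR_fact_S. rewrite !S_INR. pose proof (fact_pos j). pose proof (fact_pos l).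
      pose proof (fact_pos (j + S l)). pose proof (pos_INR (j + S l)). pose proof (pos_INR l).
      field. nz.
Qed.



Lemma Fterm_scale r w k : Fterm (Cscale r w) k = Cscale (r ^ k) (Fterm w k).
Proof. unfold Fterm. rewrite Cpow_scale. generalize (Cpow w k); intros c; destruct c; apply C_ext; simpl; ring. Qed.

Lemma Cpartial_scale r f n : Cscale r (Cpartial f n) = Cpartial (fun k => Cscale r (f k)) n.
Proof. rewrite Cscale_mul, <- Cpartial_mull. apply Cpartial_ext; intros; rewrite Cscale_mul; reflexivity. Qed.

Lemma cint_realK (phi : R -> R) Phi K a b : rint phi a b Phi -> cint_is (fun t => Cscale (phi t) K) a b (Cscale Phi K).
Proof.
  intros H. split; simpl.
  - eapply rint_ext; [|eapply rint_eqv; [|apply (rint_scal _ _ _ (Re K) _ H)]]; [intros; simpl; ring|ring].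
  - eapply rint_ext; [|eapply rint_eqv; [|apply (rint_scal _ _ _ (Im K) _ H)]]; [intros; simpl; ring|ring].
Qed.

Definition Pterm (x y : C) n t :=
  Cpartial (fun k => Cmul (Fterm (Cscale (cos t ^ 2) x) k) (Fterm (Cscale (sin t ^ 2) y) (n - k))) n.
Definition Ith (x y : C) n := Cscale (/ INR (fact (S n))) (Cscale (/ INR (fact n)) (Cpow (Cadd x y) n)).

Lemma theta_int x y n : cint_is (fun t => Cscale (2 * sin t * cos t) (Pterm x y n t)) 0 (PI / 2) (Ith x y n).
Proof.
  eapply cint_ext; [|eapply cint_eqv; [|apply (cint_sum (fun k t => Cscale (cos t ^ (2 * k + 1) * sin t ^ (2 * (n - k) + 1))
                  (Cscale 2 (Cmul (Fterm x k) (Fterm y (n - k)))))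
     (fun k => Cscale (INR (fact k) * INR (fact (n - k)) / (2 * INR (fact (k + (n - k) + 1))))
                  (Cscale 2 (Cmul (Fterm x k) (Fterm y (n - k))))))]].
  - intros t. cbv beta. unfold Pterm. rewrite Cpartial_scale. apply Cpartial_ext. intros k Hk.
    rewrite !Fterm_scale. rewrite <- !pow_mult, !pow_add.
    generalize (Fterm x k) (Fterm y (n - k)); intros A B; destruct A, B; apply C_ext; simpl; ring.
  - unfold Ith. rewrite <- binom, !Cpartial_scale. apply Cpartial_ext. intros k Hk.
    unfold Bt, Fterm. replace (k + (n - k) + 1)%nat with (S n) by lia.
    pose proof (fact_pos k). pose proof (fact_pos (n - k)). pose proof (fact_pos (S n)).
    set (fS := INR (fact (S n))) in *. set (f1 := INR (fact k)) in *. set (f2 := INR (fact (n - k))) in *.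
    clearbody fS f1 f2.
    generalize (Cpow x k) (Cpow y (n - k)); intros A B; destruct A, B; apply C_ext; simpl; field; nz.
  - intros kk. apply cint_realK. apply beta.
Qed.

Lemma sqr_le1 r : Rabs r <= 1 -> Rabs (r ^ 2) <= 1.
Proof. intros H. rewrite <- RPow_abs. simpl. pose proof (Rabs_pos r). nra. Qed.

Lemma abs1_scale_le r w : Rabs r <= 1 -> abs1 (Cscale r w) <= abs1 w.
Proof. intros H. rewrite abs1_scale. pose proof (abs1_ge0 w). nra. Qed.

Lemma theta_lemma x y L : csum (Ith x y) L ->
  cint_is (fun t => Cscale (2 * sin t * cos t)
     (Cmul (Fdef (Cscale (cos t ^ 2) x)) (Fdef (Cscale (sin t ^ 2) y)))) 0 (PI / 2) L.
Proof.
  intros HL.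
  set (X := abs1 x). set (Y := abs1 y).
  apply (cint_series (fun n t => Cscale (2 * sin t * cos t) (Pterm x y n t)) _
    (fun n => 2 * sum_f_R0 (fun k => (/ INR (fact k) * X ^ k) * (/ INR (fact (n - k)) * Y ^ (n - k))) n)
    (Ith x y)); auto.
  - intros n t. rewrite abs1_scale.
    assert (Hc : Rabs (cos t) <= 1) by (apply Rabs_le; apply COS_bound).
    assert (Hs : Rabs (sin t) <= 1) by (apply Rabs_le; apply SIN_bound).
    assert (H2 : Rabs (2 * sin t * cos t) <= 2).
    { rewrite !Rabs_mult, Rabs_pos_eq by lra. pose proof (Rabs_pos (sin t)). pose proof (Rabs_pos (cos t)). nra. }
    assert (HP : abs1 (Pterm x y n t) <= sum_f_R0 (fun k => (/ INR (fact k) * X ^ k) * (/ INR (fact (n - k)) * Y ^ (n - k))) n).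
    { unfold Pterm. eapply Rle_trans; [apply abs1_Cpartial|]. apply sum_Rle. intros k Hk.
      eapply Rle_trans; [apply abs1_mul|].
      apply Rmult_le_compat; try apply abs1_ge0.
      - eapply Rle_trans; [apply Fterm_bound|]. apply Rmult_le_compat_l.
        left; apply Rinv_0_lt_compat, fact_pos. apply pow_incr. split; [apply abs1_ge0|].
        apply abs1_scale_le. apply sqr_le1; auto.
      - eapply Rle_trans; [apply Fterm_bound|]. apply Rmult_le_compat_l.
        left; apply Rinv_0_lt_compat, fact_pos. apply pow_incr. split; [apply abs1_ge0|].
        apply abs1_scale_le. apply sqr_le1; auto. }
    pose proof (abs1_ge0 (Pterm x y n t)). pose proof (Rabs_pos (2 * sin t * cos t)). nra.
  - pose proof (proj1 (is_pseries_R _ _ _) (is_exp_Reals X)) as E1.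
    pose proof (proj1 (is_pseries_R _ _ _) (is_exp_Reals Y)) as E2.
    assert (P1 : forall n, 0 <= / INR (fact n) * X ^ n).
    { intros; apply Rmult_le_pos; [left; apply Rinv_0_lt_compat, fact_pos|apply pow_le; apply abs1_ge0]. }
    assert (P2 : forall n, 0 <= / INR (fact n) * Y ^ n).
    { intros; apply Rmult_le_pos; [left; apply Rinv_0_lt_compat, fact_pos|apply pow_le; apply abs1_ge0]. }
    eexists. apply rs_scal. exact (is_series_mult_pos _ _ _ _ E1 E2 P1 P2).
  - apply theta_int.
  - intros t. apply csum_scale.
    apply (csum_mult (Fterm (Cscale (cos t ^ 2) x)) (Fterm (Cscale (sin t ^ 2) y)));
      auto using F_csum, Fterm_abs_rex.
Qed.


Definition rinv (i : nat) : nat := match i with 1=>1|2=>7|3=>3|4=>5|5=>4|6=>6|7=>2|8=>8|_=>0 end%nat.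
Definition sgn (l : nat) : R := match l with 5%nat => -1 | 7%nat => -1 | _ => 1 end.
Definition Tex (g : mat2) i j := Cscale (sgn (rinv i) * sgn (rinv j)) (V8 g (rinv i) (rinv j)).

Lemma mulL (M : Cmat) i j : (1<=j<=8)%nat ->
  mat_mul 8 M L8 i j = Cscale (sgn (rinv j)) (M i (rinv j)).
Proof.
  intros Hj.
  assert (Hj' : (j=1\/j=2\/j=3\/j=4\/j=5\/j=6\/j=7\/j=8)%nat) by lia.
  unfold mat_mul, L8.
  destruct Hj' as [->|[->|[->|[->|[->|[->|[->| ->]]]]]]]; cbn -[Rmult Rplus Rminus Ropp];
  repeat match goal with |- context [M ?a ?b] => let e := fresh in destruct (M a b) as [e ?] end;
  apply C_ext; cbn -[Rmult Rplus Rminus Ropp]; ring.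
Qed.

Lemma Lmul (M : Cmat) i j : (1<=i<=8)%nat ->
  mat_mul 8 (mat_adj L8) M i j = Cscale (sgn (rinv i)) (M (rinv i) j).
Proof.
  intros Hj.
  assert (Hj' : (i=1\/i=2\/i=3\/i=4\/i=5\/i=6\/i=7\/i=8)%nat) by lia.
  unfold mat_mul, mat_adj, L8.
  destruct Hj' as [->|[->|[->|[->|[->|[->|[->| ->]]]]]]]; cbn -[Rmult Rplus Rminus Ropp];
  repeat match goal with |- context [M ?a ?b] => let e := fresh in destruct (M a b) as [e ?] end;
  apply C_ext; cbn -[Rmult Rplus Rminus Ropp]; ring.
Qed.

Lemma T_ent g i j : (1<=i<=8)%nat -> (1<=j<=8)%nat -> T_SU2 g i j = Tex g i j.
Proof.
  intros Hi Hj. unfold T_SU2. rewrite Lmul by lia. rewrite mulL by lia.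
  unfold Tex. apply C_ext; simpl; ring.
Qed.

Lemma Csum_ext k f g : (forall s, (1<=s<=k)%nat -> f s = g s) -> Csum k f = Csum k g.
Proof.
  induction k; intros H; simpl; auto.
  rewrite IHk, H; [reflexivity|lia|]; intros; apply H; lia.
Qed.

Definition pp (z w : Cvec) a b := pair_ z w a b.
Definition AA z w := Cadd (Cadd (pp z w 1 1) (pp z w 2 2)) (Cadd (pp z w 3 3) (pp z w 4 4)).
Definition BB z w := Cadd (Cadd (pp z w 5 5) (pp z w 6 6)) (Cadd (pp z w 7 7) (pp z w 8 8)).
Definition CC z w := Csub (Cadd (pp z w 1 7) (pp z w 3 5)) (Cadd (pp z w 4 6) (pp z w 2 8)).
Definition DD z w := Csub (Cadd (pp z w 7 1) (pp z w 5 3)) (Cadd (pp z w 6 4) (pp z w 8 2)).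

Lemma dot8 th al ga z w :
  Cdot 8 z (mat_vec 8 (T_SU2 (g_SU2 th al ga)) w) =
  Cadd (Cscale (cos th) (Cadd (Cmul (Cexpi (-al)) (AA z w)) (Cmul (Cexpi al) (BB z w))))
       (Cscale (sin th) (Csub (Cmul (Cexpi (-ga)) (CC z w)) (Cmul (Cexpi ga) (DD z w)))).
Proof.
  unfold Cdot. rewrite (Csum_ext 8 _ (fun s => Cmul (z s) (Cconj (Csum 8 (fun j => Cmul (Tex (g_SU2 th al ga) s j) (w j)))))).
  2:{ intros s Hs. unfold mat_vec. f_equal. f_equal. apply Csum_ext. intros j Hj. rewrite T_ent; auto. }
  unfold Tex, V8, g_SU2, AA, BB, CC, DD, pp, pair_. cbn -[cos sin Rmult Rplus Rminus Ropp].
  repeat match goal with |- context [z ?a] => let e := fresh "zr" in let f := fresh "zi" in destruct (z a) as [e f] end;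
  repeat match goal with |- context [w ?a] => let e := fresh "wr" in let f := fresh "wi" in destruct (w a) as [e f] end.
  apply C_ext; cbn -[cos sin Rmult Rplus Rminus Ropp]; rewrite ?cos_neg, ?sin_neg; ring.
Qed.

Lemma varrho_eq z w : varrho z w = Csub (Cmul (AA z w) (BB z w)) (Cmul (CC z w) (DD z w)).
Proof.
  unfold varrho, AA, BB, CC, DD, pp, pair_. cbn -[Rmult Rplus Rminus Ropp].
  repeat match goal with |- context [z ?a] => let e := fresh "zr" in let f := fresh "zi" in destruct (z a) as [e f] end;
  repeat match goal with |- context [w ?a] => let e := fresh "wr" in let f := fresh "wi" in destruct (w a) as [e f] end.
  apply C_ext; cbn -[Rmult Rplus Rminus Ropp]; ring.
Qed.

Lemma dot4 psi z w :
  Cdot 4 z (mat_vec 4 (T_S1 psi) w) = Cadd (Cmul (u12 z w) (Cexpi psi)) (Cmul (u34 z w) (Cexpi (- psi))).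
Proof.
  unfold Cdot, mat_vec, T_S1, u12, u34. cbn -[cos sin Rmult Rplus Rminus Ropp].
  repeat match goal with |- context [z ?a] => let e := fresh "zr" in let f := fresh "zi" in destruct (z a) as [e f] end;
  repeat match goal with |- context [w ?a] => let e := fresh "wr" in let f := fresh "wi" in destruct (w a) as [e f] end.
  apply C_ext; cbn -[cos sin Rmult Rplus Rminus Ropp]; rewrite ?cos_neg, ?sin_neg; ring.
Qed.


Lemma Cint_fext (f g : R -> C) a b : (forall t, f t = g t) -> Cint f a b = Cint g a b.
Proof. intros H. f_equal. apply functional_extensionality; auto. Qed.

Lemma Q2_part hbar (Hh : 0 < hbar) z w :
  Cseries_sum (Q2_term hbar z w)
    (Cscale (/ 2) (Cadd (Cexp (Cscale (/ hbar) (u12 z w))) (Cexp (Cscale (- / hbar) (u12 z w))))).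
Proof.
  set (u := u12 z w). set (v := Cscale (/ hbar) u).
  set (T := fun n => Cscale (/ 2) (Cadd (Cscale (/ INR (fact n)) (Cpow v n))
                                    (Cscale (/ INR (fact n)) (Cpow (Cscale (- / hbar) u) n)))).
  assert (HT : csum T (Cscale (/ 2) (Cadd (Cexp v) (Cexp (Cscale (- / hbar) u))))).
  { apply csum_scale, csum_plus; apply exp_series. }
  assert (Hm : forall n, Cpow (Cscale (- / hbar) u) n = Cscale ((-1) ^ n) (Cpow v n)).
  { intros n. unfold v. rewrite <- Cpow_scale. f_equal. apply C_ext; simpl; ring. }
  assert (Hev : forall k, T (2 * k)%nat = Cscale (/ INR (fact (2 * k))) (Cpow v (2 * k))).
  { intros k. unfold T. rewrite Hm, pow_1_even. generalize (Cpow v (2 * k)); intros c; destruct c; apply C_ext; simpl; field; apply INR_fact_neq_0. }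
  assert (Hodd : forall k, T (2 * k + 1)%nat = C0).
  { intros k. unfold T. rewrite Hm. replace (2 * k + 1)%nat with (S (2 * k)) by lia. rewrite pow_1_odd.
    pose proof (INR_fact_neq_0 (S (2 * k))). set (F := INR (fact (S (2 * k)))) in *. clearbody F.
    generalize (Cpow v (S (2 * k))); intros c; destruct c; apply C_ext; simpl; field; auto. }
  destruct (csum_exists (fun k => T (2 * k)%nat) (fun k => / INR (fact k) * (abs1 v ^ 2) ^ k)) as [L HL].
  { intros k. rewrite Hev. eapply Rle_trans; [apply abs1_expterm|]. rewrite <- pow_mult.
    apply Rmult_le_compat_r. apply pow_le, abs1_ge0.
    apply Rinv_le_contravar. apply fact_pos. apply le_INR, fact_le. lia. }
  { apply exp_rex. }
  pose proof (csum_even _ _ HL Hodd) as HL2.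
  rewrite <- (csum_unique _ _ _ HL2 HT).
  apply csum_Cseries. eapply csum_ext; [|exact HL].
  intros k. cbv beta. rewrite Hev. unfold Q2_term. fold u. unfold v. rewrite Cpow_scale, pow_inv.
  generalize (Cpow u (2 * k)); intros c; destruct c. pose proof (fact_pos (2 * k)).
  assert (0 < hbar ^ (2 * k)) by (apply pow_lt; auto).
  set (F := INR (fact (2 * k))) in *. set (H2 := hbar ^ (2 * k)) in *. clearbody F H2.
  apply C_ext; simpl; field; nz.
Qed.

Lemma hpow h k : h <> 0 -> (/ h * / h) ^ k = / h ^ (2 * k).
Proof. intros H. rewrite pow_mult, <- pow_inv. f_equal. field; auto. Qed.

Lemma Q4_part hbar (Hh : 0 < hbar) z w :
  Cseries_sum (Q4_term hbar z w)
    (Cscale (/ (2 * PI))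
       (Cint (fun psi => Cexp (Cscale (/ hbar) (Cdot 4 z (mat_vec 4 (T_S1 psi) w)))) 0 (2 * PI))).
Proof.
  set (a := Cscale (/ hbar) (u12 z w)). set (b := Cscale (/ hbar) (u34 z w)).
  rewrite (Cint_eq _ _ _ (Cscale (2 * PI) (Fdef (Cmul a b)))).
  2:{ eapply cint_ext; [|apply J_lemma]. intros t. cbv beta. rewrite dot4. f_equal.
      unfold a, b. rewrite !Cscale_mul. ring. }
  replace (Cscale (/ (2 * PI)) (Cscale (2 * PI) (Fdef (Cmul a b)))) with (Fdef (Cmul a b)).
  2:{ generalize (Fdef (Cmul a b)); intros c; destruct c; pose proof PI_RGT_0; apply C_ext; simpl; field; nz. }
  apply csum_Cseries. eapply csum_ext; [|apply F_csum].
  intros k. unfold Fterm, Q4_term, a, b.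
  replace (Cmul (Cscale (/ hbar) (u12 z w)) (Cscale (/ hbar) (u34 z w)))
    with (Cscale (/ hbar * / hbar) (Cmul (u12 z w) (u34 z w))) by (rewrite !Cscale_mul, RtoC_mult; ring).
  rewrite Cpow_scale, hpow, Cpow_mul by lra.
  generalize (Cmul (Cpow (u12 z w) k) (Cpow (u34 z w) k)); intros c; destruct c.
  pose proof (fact_pos k). assert (0 < hbar ^ (2 * k)) by (apply pow_lt; auto).
  set (F := INR (fact k)) in *. set (H2 := hbar ^ (2 * k)) in *. clearbody F H2.
  apply C_ext; simpl; field; nz.
Qed.

Lemma reshape k E P Q : E = Cadd P Q -> Cscale k (Cexp E) = Cmul (Cmul (RtoC k) (Cexp P)) (Cexp Q).
Proof. intros ->. rewrite Cexp_add, Cscale_mul. ring. Qed.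

Lemma Q8_part hbar (Hh : 0 < hbar) z w :
  Cseries_sum (Q8_term hbar z w)
    (Cint (fun theta =>
       Cint (fun alpha =>
         Cint (fun gamma =>
           Cscale (/ (2 * PI ^ 2) * sin theta * cos theta)
             (Cexp (Cscale (/ hbar)
                (Cdot 8 z (mat_vec 8 (T_SU2 (g_SU2 theta alpha gamma)) w)))))
           0 (2 * PI))
         0 (2 * PI))
       0 (PI / 2)).
Proof.
  assert (Hh0 : hbar <> 0) by lra. pose proof PI_RGT_0 as HPI.
  set (A := AA z w). set (B := BB z w). set (Cc := CC z w). set (D := DD z w).
  set (x := Cscale (/ hbar ^ 2) (Cmul A B)). set (y := Cscale (/ hbar ^ 2) (Copp (Cmul Cc D))).
  assert (SG : forall th al,
    Cint (fun ga => Cscale (/ (2 * PI ^ 2) * sin th * cos th)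
             (Cexp (Cscale (/ hbar) (Cdot 8 z (mat_vec 8 (T_SU2 (g_SU2 th al ga)) w))))) 0 (2 * PI) =
    Cmul (Cmul (RtoC (/ (2 * PI ^ 2) * sin th * cos th))
            (Cexp (Cadd (Cmul (Cscale (/ hbar) (Cscale (cos th) B)) (Cexpi al))
                        (Cmul (Cscale (/ hbar) (Cscale (cos th) A)) (Cexpi (- al))))))
         (Cscale (2 * PI) (Fdef (Cscale (sin th ^ 2) y)))).
  { intros th al. apply Cint_eq.
    set (K := Cmul (RtoC (/ (2 * PI ^ 2) * sin th * cos th))
            (Cexp (Cadd (Cmul (Cscale (/ hbar) (Cscale (cos th) B)) (Cexpi al))
                        (Cmul (Cscale (/ hbar) (Cscale (cos th) A)) (Cexpi (- al)))))).
    set (a := Cscale (/ hbar) (Cscale (sin th) (Copp D))).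
    set (b := Cscale (/ hbar) (Cscale (sin th) Cc)).
    eapply cint_ext; [|eapply cint_eqv; [|apply (cint_mulc K _ _ _ _ (J_lemma a b))]].
    - intros t. cbv beta. rewrite dot8. fold A B Cc D.
      unfold K. symmetry. apply reshape. unfold a, b. rewrite !Cscale_mul. ring.
    - unfold K. f_equal. f_equal. f_equal.
      unfold a, b, y. destruct Cc, D. apply C_ext; simpl; field; auto. }
  assert (SA : forall th,
    Cint (fun al => Cmul (Cmul (RtoC (/ (2 * PI ^ 2) * sin th * cos th))
            (Cexp (Cadd (Cmul (Cscale (/ hbar) (Cscale (cos th) B)) (Cexpi al))
                        (Cmul (Cscale (/ hbar) (Cscale (cos th) A)) (Cexpi (- al))))))
         (Cscale (2 * PI) (Fdef (Cscale (sin th ^ 2) y)))) 0 (2 * PI) =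
    Cscale (2 * sin th * cos th) (Cmul (Fdef (Cscale (cos th ^ 2) x)) (Fdef (Cscale (sin th ^ 2) y)))).
  { intros th. apply Cint_eq.
    set (K := Cmul (RtoC (/ (2 * PI ^ 2) * sin th * cos th)) (Cscale (2 * PI) (Fdef (Cscale (sin th ^ 2) y)))).
    set (a := Cscale (/ hbar) (Cscale (cos th) B)).
    set (b := Cscale (/ hbar) (Cscale (cos th) A)).
    eapply cint_ext; [|eapply cint_eqv; [|apply (cint_mulc K _ _ _ _ (J_lemma a b))]].
    - intros t. cbv beta. unfold K. ring.
    - unfold K. replace (Cmul a b) with (Cscale (cos th ^ 2) x).
      2:{ unfold a, b, x. destruct A, B. apply C_ext; simpl; field; auto. }
      generalize (Fdef (Cscale (cos th ^ 2) x)) (Fdef (Cscale (sin th ^ 2) y)). intros F1 F2.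
      destruct F1, F2. apply C_ext; simpl; field; nz. }
  rewrite (Cint_fext _ (fun th => Cscale (2 * sin th * cos th)
              (Cmul (Fdef (Cscale (cos th ^ 2) x)) (Fdef (Cscale (sin th ^ 2) y))))).
  2:{ intros th. rewrite <- SA. apply Cint_fext. intros al. apply SG. }
  destruct (csum_exists (Ith x y) (fun n => / INR (fact n) * abs1 (Cadd x y) ^ n)) as [L HL].
  { intros n. unfold Ith. rewrite abs1_scale. eapply Rle_trans; [|apply abs1_expterm].
    pose proof (abs1_ge0 (Cscale (/ INR (fact n)) (Cpow (Cadd x y) n))).
    rewrite Rabs_pos_eq by (left; apply Rinv_0_lt_compat, fact_pos).
    assert (/ INR (fact (S n)) <= 1) by (rewrite <- Rinv_1; apply Rinv_le_contravar; [lra|apply fact_ge1]).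
    nra. }
  { apply exp_rex. }
  rewrite (Cint_eq _ _ _ L (theta_lemma x y L HL)).
  apply csum_Cseries. eapply csum_ext; [|exact HL].
  intros n. unfold Ith, Q8_term. rewrite varrho_eq. fold A B Cc D.
  replace (Cadd x y) with (Cscale (/ hbar ^ 2) (Csub (Cmul A B) (Cmul Cc D)))
    by (unfold x, y; rewrite !Cscale_mul; unfold Csub; ring).
  rewrite Cpow_scale, pow_inv, <- pow_mult.
  generalize (Cpow (Csub (Cmul A B) (Cmul Cc D)) n); intros c; destruct c.
  pose proof (fact_pos n). pose proof (fact_pos (S n)). assert (0 < hbar ^ (2 * n)) by (apply pow_lt; auto).
  set (F1 := INR (fact n)) in *. set (F2 := INR (fact (S n))) in *. set (H2 := hbar ^ (2 * n)) in *.
  clearbody F1 F2 H2.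
  apply C_ext; simpl; field; nz.
Qed.

Theorem proposition2p3 (hbar : R) (Hhbar : 0 < hbar) :
  (* Q_2 on C^2 *)
  (forall z w : Cvec, vec_nonzero 2 z -> vec_nonzero 2 w ->
     Cseries_sum (Q2_term hbar z w)
       (Cscale (/ 2) (Cadd (Cexp (Cscale (/ hbar) (u12 z w)))
                           (Cexp (Cscale (- / hbar) (u12 z w)))))) /\
  (* Q_4 on C^4 *)
  (forall z w : Cvec, vec_nonzero 4 z -> vec_nonzero 4 w ->
     Cseries_sum (Q4_term hbar z w)
       (Cscale (/ (2 * PI))
          (Cint (fun psi => Cexp (Cscale (/ hbar) (Cdot 4 z (mat_vec 4 (T_S1 psi) w))))
                0 (2 * PI)))) /\
  (* Q_8 on C^8 *)
  (forall z w : Cvec, vec_nonzero 8 z -> vec_nonzero 8 w ->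
     Cseries_sum (Q8_term hbar z w)
       (Cint (fun theta =>
          Cint (fun alpha =>
            Cint (fun gamma =>
              Cscale (/ (2 * PI ^ 2) * sin theta * cos theta)
                (Cexp (Cscale (/ hbar)
                   (Cdot 8 z (mat_vec 8 (T_SU2 (g_SU2 theta alpha gamma)) w)))))
              0 (2 * PI))
            0 (2 * PI))
          0 (PI / 2))).
Proof.
  split; [|split]; intros z w _ _.
  - apply Q2_part; auto.
  - apply Q4_part; auto.
  - apply Q8_part; auto.
Qed.
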